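(* Let $n\ge 1$ and let $\mathcal{L}$ be a fully dissipative $n$-qubit Lindbladian all of whose jump operators are $n$-qubit Pauli operators, i.e. $$\mathcal{L}(\rho)=\sum_{j}\gamma_j\Big(P_j\rho P_j^{\dagger}-\tfrac12\{P_j^{\dagger}P_j,\rho\}\Big)=\sum_j\gamma_j\big(P_j\rho P_j-\rho\big),$$ where each $P_j$ is a tensor product of single-qubit operators from $\{I,X,Y,Z\}$ and $\gamma_j\ge 0$. Then $\mathcal{L}$ is quantum programmable.
   Context: A Lindbladian on a finite-dimensional Hilbert space $\mathcal{H}_S$ is a superoperator of GKSL form $\mathcal{L}(\rho)=-i[H,\rho]+\sum_j\gamma_j(L_j\rho L_j^\dagger-\frac12\{L_j^\dagger L_j,\rho\})$ with $H$ Hermitian and $\gamma_j\ge 0$; ''fully dissipative'' means $H=0$. It generates the quantum dynamical semigroup $(e^{t\mathcal{L}})_{t\ge0}$ of CPTP maps. Given a class $\Omega$ of linear maps from operators on $\mathcal{H}_S\otimes\mathcal{H}_P$ to operators on $\mathcal{H}_S$ (with $\mathcal{H}_P$ a finite-dimensional program space), $\mathcal{L}$ is (exactly) $\Omega$-programmable if there exist a map $\mathcal{P}\in\Omega$ and a continuous one-parameter family of density operators $(\pi_t)_{t\ge0}$ on $\mathcal{H}_P$ such that $\mathcal{P}(\rho\otimes\pi_t)=e^{t\mathcal{L}}(\rho)$ for all $t\ge0$ and all $\rho$ (equivalently, the maps $\mathcal{P}(\cdot\otimes\pi_t)$ and $e^{t\mathcal{L}}$ coincide). $\mathcal{L}$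 is quantum programmable if this holds with $\Omega$ the set of completely positive trace-preserving (CPTP) maps. *)

(* Defs.v *)
From HB Require Import structures.
From mathcomp Require Import all_boot all_order all_algebra.
From mathcomp Require Import all_classical all_reals all_analysis.
From mathcomp Require Import complex mxtens.
Set Implicit Arguments. Unset Strict Implicit. Unset Printing Implicit Defensive.
Import Order.TTheory GRing.Theory Num.Theory.
Import numFieldNormedType.Exports.
Local Open Scope ring_scope.
Local Open Scope classical_set_scope.

Section QDefs.
Variable R : realType.
Local Notation C := (R[i]).

Definition adjmx {m n} (A : 'M[C]_(m, n)) : 'M[C]_(n, m) :=
  \matrix_(i, j) Num.conj (A j i).

Definition psd {d} (A : 'M[C]_d) : Prop :=
  forall v : 'cV[C]_d, 0 <= ((adjmx v) *m A *m v) 0 0.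

Definition density {d} (A : 'M[C]_d) : Prop := psd A /\ \tr A = 1.

Definition linmap {a b} (Phi : 'M[C]_a -> 'M[C]_b) : Prop :=
  forall (c : C) X Y, Phi (c *: X + Y) = c *: Phi X + Phi Y.

(* block (p,q) of a (k*a)x(k*a) matrix, for the tensor decomposition C^k (x) C^a *)
Definition blockmx {k a} (p q : 'I_k) (X : 'M[C]_(k * a)) : 'M[C]_a :=
  \matrix_(r, s) X (mxtens_index (p, r)) (mxtens_index (q, s)).

(* (id_k (x) Phi) applied to X *)
Definition ampl {a b} (k : nat) (Phi : 'M[C]_a -> 'M[C]_b) (X : 'M[C]_(k * a))
  : 'M[C]_(k * b) :=
  \sum_(p < k) \sum_(q < k) (delta_mx p q *t Phi (blockmx p q X)).

Definition completely_positive {a b} (Phi : 'M[C]_a -> 'M[C]_b) : Prop :=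
  forall (k : nat) (X : 'M[C]_(k * a)), psd X -> psd (@ampl a b k Phi X).

Definition trace_preserving {a b} (Phi : 'M[C]_a -> 'M[C]_b) : Prop :=
  forall X, \tr (Phi X) = \tr X.

Definition CPTP {a b} (Phi : 'M[C]_a -> 'M[C]_b) : Prop :=
  linmap Phi /\ completely_positive Phi /\ trace_preserving Phi.

(* single-qubit Paulis: 0 = I, 1 = X, 2 = Y, 3 = Z *)
Definition pauli1 (c : 'I_4) : 'M[C]_2 :=
  \matrix_(i < 2, j < 2)
    match val c with
    | 0 => if i == j then 1 else 0
    | 1 => if i == j then 0 else 1
    | 2 => if i == j then 0 else
             (if val i == 0 then - 'i else 'i)
    | _ => if i == j then (if val i == 0 then 1 else -1) else 0
    end.

Definition qbit n (i : 'I_(2 ^ n)) (k : nat) : 'I_2 :=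
  @Ordinal 2 ((i %/ 2 ^ k) %% 2) (@ltn_pmod _ 2 (erefl true)).

(* n-qubit Pauli operator sigma_{s 0} (x) ... (x) sigma_{s (n-1)}, entrywise *)
Definition pauli n (s : 'I_n -> 'I_4) : 'M[C]_(2 ^ n) :=
  \matrix_(i, j) \prod_(k < n) pauli1 (s k) (qbit i k) (qbit j k).

Definition lindbladian {d m} (gamma : 'I_m -> R) (Ls : 'I_m -> 'M[C]_d)
  (rho : 'M[C]_d) : 'M[C]_d :=
  \sum_(j < m) ((gamma j)%:C)%C *:
     (Ls j *m rho *m adjmx (Ls j)
      - (2%:R)^-1 *: (adjmx (Ls j) *m Ls j *m rho + rho *m (adjmx (Ls j) *m Ls j))).

Definition cvgC (u : nat -> C) (l : C) : Prop :=
  (fun N : nat => (complex.Re (u N) : R)) @ \oo --> (complex.Re l : R) /\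
  (fun N : nat => (complex.Im (u N) : R)) @ \oo --> (complex.Im l : R).

Definition is_expL {d} (L : 'M[C]_d -> 'M[C]_d) (t : R) (rho sigma : 'M[C]_d)
  : Prop :=
  forall i j, cvgC (fun N => \sum_(k < N) (((t ^+ k / (k`!)%:R)%:C)%C * (iter k L rho) i j))
                   (sigma i j).

Definition continuousC_on (A : set R) (f : R -> C) : Prop :=
  {within A, continuous (fun t => complex.Re (f t))} /\
  {within A, continuous (fun t => complex.Im (f t))}.

Definition quantum_programmable {d} (L : 'M[C]_d -> 'M[C]_d) : Prop :=
  exists (dP : nat) (Phi : 'M[C]_(d * dP) -> 'M[C]_d) (pi : R -> 'M[C]_dP),
    CPTP Phi /\
    (forall t, 0 <= t -> density (pi t)) /\
    (forall a b, continuousC_on [set t | 0 <= t] (fun t => pi t a b)) /\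
    (forall t, 0 <= t -> forall rho : 'M[C]_d, is_expL L t rho (Phi (rho *t pi t))).

End QDefs.

(* Main.v *)
Set Warnings "-notation-overridden,-ambiguous-paths,-notation-incompatible-prefix,-deprecated".
Require Import Defs.
From HB Require Import structures.
From mathcomp Require Import all_boot all_order all_algebra.
From mathcomp Require Import all_classical all_reals all_analysis.
From mathcomp Require Import complex mxtens.
From mathcomp Require Import ring.
Import Order.TTheory GRing.Theory Num.Theory.
Set Implicit Arguments. Unset Strict Implicit. Unset Printing Implicit Defensive.
Local Open Scope ring_scope.

Section Pauli. Variable R : realType.
Local Notation C := (R[i]).

Lemma ii : 'i * 'i = -1 :> C.
Proof. by rewrite -expr2 sqrCi. Qed.

Lemma p1_herm c x y : Num.conj (@pauli1 R c y x) = pauli1 R c x y.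
Proof.
rewrite !mxE.
case: c => [[|[|[|[|c]]]] Hc] //=;
case: x => [[|[|x]] Hx] //=; case: y => [[|[|y]] Hy] //=.
all: rewrite ?rmorphN ?rmorph1 ?rmorph0 /= ?conjCi ?opprK //.
Qed.

Lemma p1_sq c x y :
  \sum_(b < 2) pauli1 R c x b * pauli1 R c b y = (x == y)%:R.
Proof.
rewrite !big_ord_recr big_ord0 /= !mxE add0r.
case: c => [[|[|[|[|c]]]] Hc] //=;
case: x => [[|[|x]] Hx] //=; case: y => [[|[|y]] Hy] //=.
all: rewrite ?mul0r ?mulr0 ?add0r ?addr0 ?mul1r ?mulr1 ?mulrN ?mulNr ?opprK ?ii ?opprK //.
all: rewrite ?mulr1n ?mulr1 //.
Qed.

Definition eps (a c : 'I_4) : C :=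
  if (val a == 0%N) || (val c == 0%N) || (a == c) then 1 else -1.

Lemma p1_comm a c x y :
  \sum_(b < 2) pauli1 R a x b * pauli1 R c b y =
  eps a c * \sum_(b < 2) pauli1 R c x b * pauli1 R a b y.
Proof.
rewrite /eps !big_ord_recr !big_ord0 /= !mxE !add0r.
case: a => [[|[|[|[|a]]]] Ha] //=;
case: c => [[|[|[|[|c]]]] Hc] //=;
case: x => [[|[|x]] Hx] //=; case: y => [[|[|y]] Hy] //=.
all: rewrite ?mul0r ?mulr0 ?add0r ?addr0 ?mul1r ?mulr1 ?mulrN ?mulNr ?opprK ?ii ?opprK ?oppr0 //.
all: ring.
Qed.

Local Open Scope nat_scope.
Lemma bits_nat_inj n (x y : nat) : (x < 2 ^ n)%N -> (y < 2 ^ n)%N ->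
  (forall k, (k < n)%N -> (x %/ 2 ^ k %% 2 = y %/ 2 ^ k %% 2)%N) -> x = y.
Proof.
elim: n x y => [|n IH] x y.
  by rewrite expn0 !ltnS !leqn0 => /eqP -> /eqP ->.
move=> hx hy H.
have h0 := H 0%N isT; rewrite expn0 !divn1 in h0.
have hd : x %/ 2 = y %/ 2.
  apply: IH.
  - by rewrite ltn_divLR // -expnSr.
  - by rewrite ltn_divLR // -expnSr.
  move=> k hk; have := H k.+1 hk; by rewrite expnS !divnMA.
by rewrite (divn_eq x 2) (divn_eq y 2) hd h0.
Qed.

Local Open Scope ring_scope.
Definition bits n (i : 'I_(2 ^ n)) : {ffun 'I_n -> 'I_2} := [ffun k : 'I_n => qbit i k].

Lemma bits_inj n : injective (@bits n).
Proof.
move=> i j /ffunP H; apply: val_inj; apply: (@bits_nat_inj n _ _ (ltn_ord i) (ltn_ord j)).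
move=> k hk; have := H (Ordinal hk); rewrite !ffunE => /(congr1 val) //.
Qed.

Lemma bits_bij n : bijective (@bits n).
Proof.
apply: inj_card_bij; first exact: bits_inj.
by rewrite card_ffun !card_ord.
Qed.

Lemma sum_bits n (F : 'I_n -> 'I_2 -> C) :
  \sum_(l < 2 ^ n) \prod_(k < n) F k (qbit l k) = \prod_(k < n) \sum_(b < 2) F k b.
Proof.
rewrite bigA_distr_bigA /=.
rewrite (reindex (@bits n)) /=; last exact: onW_bij (bits_bij n).
by apply: eq_bigr => l _; apply: eq_bigr => k _; rewrite ffunE.
Qed.

Lemma pauli_mul n (s s' : 'I_n -> 'I_4) i j :
  (pauli R s *m pauli R s') i j =
  \prod_(k < n) \sum_(b < 2) pauli1 R (s k) (qbit i k) b * pauli1 R (s' k) b (qbit j k).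
Proof.
rewrite -sum_bits !mxE; apply: eq_bigr => l _; rewrite !mxE -big_split //.
Qed.

Lemma pauli_sq n (s : 'I_n -> 'I_4) : pauli R s *m pauli R s = 1%:M.
Proof.
apply/matrixP => i j; rewrite pauli_mul mxE.
under eq_bigr do rewrite p1_sq.
have [<-|nij] := eqVneq i j.
  by rewrite big1 // => k _; rewrite eqxx.
have [k hk] : exists k : 'I_n, qbit i k != qbit j k.
  apply/existsP; move: nij; apply: contraNT; rewrite negb_exists => /forallP H.
  apply/eqP/bits_inj/ffunP => k; rewrite !ffunE; exact/eqP/negPn/H.
by rewrite (bigD1 k) //= (negbTE hk) mul0r.
Qed.

Lemma pauli_adj n (s : 'I_n -> 'I_4) : adjmx (pauli R s) = pauli R s.
Proof.
apply/matrixP => i j; rewrite !mxE rmorph_prod; apply: eq_bigr => k _.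
exact: p1_herm.
Qed.

Lemma pauli_comm n (s s' : 'I_n -> 'I_4) :
  pauli R s *m pauli R s' = (\prod_(k < n) eps (s k) (s' k)) *: (pauli R s' *m pauli R s).
Proof.
apply/matrixP => i j; rewrite pauli_mul [RHS]mxE pauli_mul -big_split /=.
by apply: eq_bigr => k _; rewrite p1_comm.
Qed.

Lemma eps_conj a c : eps a c * Num.conj (eps a c) = 1.
Proof.
rewrite /eps; case: ifP => _; first by rewrite rmorph1 mulr1.
by rewrite rmorphN rmorph1 mulrNN mulr1.
Qed.

Definition unimod (e : C) := e * Num.conj e = 1.

Lemma unimodM e f : unimod e -> unimod f -> unimod (e * f).
Proof. by rewrite /unimod rmorphM => he hf; rewrite mulrACA he hf mulr1. Qed.

Lemma unimod1 : unimod 1. Proof. by rewrite /unimod rmorph1 mulr1. Qed.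

Lemma unimod_prod n (F : 'I_n -> C) : (forall k, unimod (F k)) -> unimod (\prod_k F k).
Proof.
move=> H; elim/big_ind: _ => //; [exact: unimod1 | exact: unimodM].
Qed.

Lemma pauli_comm' n (s s' : 'I_n -> 'I_4) :
  exists e, unimod e /\ pauli R s *m pauli R s' = e *: (pauli R s' *m pauli R s).
Proof.
exists (\prod_(k < n) eps (s k) (s' k)); split; last exact: pauli_comm.
apply: unimod_prod => k; exact: eps_conj.
Qed.

Lemma adjmxK m n (A : 'M[C]_(m, n)) : adjmx (adjmx A) = A.
Proof. by apply/matrixP => i j; rewrite !mxE conjCK. Qed.

Lemma adjmx_mul m n p (A : 'M[C]_(m, n)) (B : 'M[C]_(n, p)) :
  adjmx (A *m B) = adjmx B *m adjmx A.
Proof.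
apply/matrixP => i j; rewrite !mxE rmorph_sum; apply: eq_bigr => k _.
by rewrite !mxE rmorphM mulrC.
Qed.

Lemma adjmxD m n (A B : 'M[C]_(m, n)) : adjmx (A + B) = adjmx A + adjmx B.
Proof. by apply/matrixP => i j; rewrite !mxE rmorphD. Qed.

Lemma adjmxZ m n c (A : 'M[C]_(m, n)) : adjmx (c *: A) = Num.conj c *: adjmx A.
Proof. by apply/matrixP => i j; rewrite !mxE rmorphM. Qed.

Lemma adjmx1 m : adjmx (1%:M : 'M[C]_m) = 1%:M.
Proof.
by apply/matrixP => i j; rewrite !mxE rmorph_nat eq_sym.
Qed.

Lemma adjmx0 m n : adjmx (0 : 'M[C]_(m, n)) = 0.
Proof. by apply/matrixP => i j; rewrite !mxE rmorph0. Qed.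

Lemma adjmx_sum m n I (r : seq I) (P : pred I) (F : I -> 'M[C]_(m, n)) :
  adjmx (\sum_(i <- r | P i) F i) = \sum_(i <- r | P i) adjmx (F i).
Proof.
apply/matrixP => a b; rewrite !mxE !summxE rmorph_sum; apply: eq_bigr => i _.
by rewrite mxE.
Qed.

End Pauli.

Section Group.
Variables (R : realType) (n m : nat) (s : 'I_m -> 'I_n -> 'I_4).
Local Notation C := (R[i]).
Local Notation d := (2 ^ n)%N.
Local Notation P j := (pauli R (s j)).

Definition Ad (V : 'M[C]_d) (X : 'M[C]_d) := V *m X *m adjmx V.

Definition sim (X Y : 'M[C]_d) := exists e, unimod e /\ X = e *: Y.

Lemma Ad_sim V W X : sim V W -> Ad V X = Ad W X.
Proof.
move=> [e [he ->]]; rewrite /Ad adjmxZ -!scalemxAl -scalemxAr scalerA.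
by rewrite he scale1r.
Qed.

Lemma AdD V X Y : Ad V (X + Y) = Ad V X + Ad V Y.
Proof. by rewrite /Ad mulmxDr mulmxDl. Qed.
Lemma AdZ V c X : Ad V (c *: X) = c *: Ad V X.
Proof. by rewrite /Ad -scalemxAr -scalemxAl. Qed.
Lemma Ad_sum V I (r : seq I) (Pr : pred I) (F : I -> 'M[C]_d) :
  Ad V (\sum_(i <- r | Pr i) F i) = \sum_(i <- r | Pr i) Ad V (F i).
Proof. by rewrite /Ad mulmx_sumr mulmx_suml. Qed.
Lemma AdB V X Y : Ad V (X - Y) = Ad V X - Ad V Y.
Proof. by rewrite /Ad mulmxBr mulmxBl. Qed.
Lemma Ad_comp V W X : Ad V (Ad W X) = Ad (V *m W) X.
Proof. by rewrite /Ad adjmx_mul !mulmxA. Qed.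
Lemma Ad1 X : Ad 1%:M X = X.
Proof. by rewrite /Ad adjmx1 mul1mx mulmx1. Qed.

Definition flip (j : 'I_m) (S : {ffun 'I_m -> bool}) : {ffun 'I_m -> bool} :=
  [ffun i => if i == j then ~~ S i else S i].

Lemma flipK j : involutive (flip j).
Proof.
move=> S; apply/ffunP => i; rewrite !ffunE; case: eqP => // _; exact: negbK.
Qed.

Definition Ufold (r : seq 'I_m) (S : {ffun 'I_m -> bool}) : 'M[C]_d :=
  foldr (fun j M => if S j then P j *m M else M) 1%:M r.

Lemma Ufold_off j r S : j \notin r -> Ufold r (flip j S) = Ufold r S.
Proof.
elim: r => //= x r IH; rewrite in_cons negb_or => /andP [hx hr].
by rewrite ffunE eq_sym (negbTE hx) IH.
Qed.

Lemma Ufold_flip j r S : uniq r -> j \in r -> sim (P j *m Ufold r S) (Ufold r (flip j S)).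
Proof.
elim: r => //= x r IH /andP [hxr ur]; rewrite in_cons => /orP [/eqP ejx|jr].
  subst x; rewrite ffunE eqxx Ufold_off //.
  case: (S j) => /=.
    by exists 1; split; [exact: unimod1|rewrite mulmxA pauli_sq mul1mx scale1r].
  by exists 1; split; [exact: unimod1|rewrite scale1r].
have hxj : x != j by apply: contraNneq hxr => ->.
have [e' [he' HM]] := IH ur jr.
rewrite ffunE (negbTE hxj); case: (S x).
  have [e [he Hc]] := @pauli_comm' R _ (s j) (s x).
  exists (e * e'); split; first exact: unimodM.
  by rewrite mulmxA Hc -scalemxAl -mulmxA HM -scalemxAr scalerA.
by exists e'.
Qed.

Definition U (S : {ffun 'I_m -> bool}) := Ufold (enum 'I_m) S.

Lemma U_flip j S : sim (P j *m U S) (U (flip j S)).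
Proof. by apply: Ufold_flip; [exact: enum_uniq|exact: mem_enum]. Qed.

Lemma Ad_flip j S X : Ad (P j) (Ad (U S) X) = Ad (U (flip j S)) X.
Proof. by rewrite Ad_comp; apply: Ad_sim; apply: U_flip. Qed.

Lemma U_unitary S : adjmx (U S) *m U S = 1%:M.
Proof.
rewrite /U; elim: (enum 'I_m) => /=; first by rewrite adjmx1 mul1mx.
move=> x r IH; case: (S x) => //.
by rewrite adjmx_mul mulmxA -(mulmxA _ _ (P x)) pauli_adj pauli_sq mulmx1.
Qed.

Lemma U0 : U [ffun=> false] = 1%:M.
Proof. by rewrite /U; elim: (enum 'I_m) => //= x r IH; rewrite ffunE. Qed.

Variable gamma : 'I_m -> R.

Definition Lsimp (X : 'M[C]_d) := \sum_j ((gamma j)%:C)%C *: (Ad (P j) X - X).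

Lemma L_eq X : lindbladian gamma (fun j => P j) X = Lsimp X.
Proof.
apply: eq_bigr => j _; congr (_ *: _).
rewrite pauli_adj pauli_sq mul1mx mulmx1 /Ad pauli_adj; congr (_ - _).
have -> : X + X = (2%:R : C) *: X by rewrite scaler_nat mulr2n.
by rewrite scalerA mulVf ?scale1r // pnatr_eq0.
Qed.

Lemma LsimpZ c X : Lsimp (c *: X) = c *: Lsimp X.
Proof.
rewrite /Lsimp scaler_sumr; apply: eq_bigr => j _.
by rewrite AdZ -scalerBr !scalerA mulrC.
Qed.

Lemma Lsimp_sum I (r : seq I) (Pr : pred I) (F : I -> 'M[C]_d) :
  Lsimp (\sum_(i <- r | Pr i) F i) = \sum_(i <- r | Pr i) Lsimp (F i).
Proof.
rewrite /Lsimp exchange_big /=; apply: eq_bigr => j _.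
by rewrite Ad_sum -sumrB scaler_sumr.
Qed.

End Group.

Section Fourier.
Variables (R : realType) (n m : nat) (s : 'I_m -> 'I_n -> 'I_4) (gamma : 'I_m -> R).
Local Notation C := (R[i]).
Local Notation d := (2 ^ n)%N.
Local Notation P j := (pauli R (s j)).
Local Notation Sub := {ffun 'I_m -> bool}.
Local Notation U := (@U R n m s).
Local Notation Lsimp := (@Lsimp R n m s gamma).

Definition cj (T : Sub) j : R := if T j then -1 else 1.
Definition chi (T S : Sub) : R := \prod_j (if S j && T j then -1 else 1).
Definition lam (T : Sub) : R := \sum_j gamma j * (cj T j - 1).
Definition RT (T : Sub) (X : 'M[C]_d) : 'M[C]_d :=
  (((2 ^+ m)^-1 : R)%:C)%C *: \sum_(S : Sub) ((chi T S)%:C)%C *: Ad (U S) X.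

Lemma chi_flip T S j : chi T (flip j S) = cj T j * chi T S.
Proof.
rewrite /chi (bigD1 j) //= [in RHS](bigD1 j) //= ffunE eqxx mulrA.
congr (_ * _); last first.
  by apply: eq_bigr => i hi; rewrite ffunE (negbTE hi).
by rewrite /cj; case: (S j); case: (T j); rewrite /= ?mulr1 ?mulN1r ?opprK.
Qed.

Lemma Ad_RT j T X : Ad (P j) (RT T X) = ((cj T j)%:C)%C *: RT T X.
Proof.
rewrite /RT AdZ Ad_sum.
under eq_bigr do rewrite AdZ Ad_flip.
rewrite (reindex_inj (inv_inj (@flipK m j))) /=.
under eq_bigr do rewrite flipK chi_flip rmorphM -scalerA.
by rewrite -scaler_sumr !scalerA mulrC.
Qed.

Lemma L_RT T X : Lsimp (RT T X) = ((lam T)%:C)%C *: RT T X.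
Proof.
rewrite /Lsimp.
under eq_bigr do rewrite Ad_RT -[X in _ - X]scale1r -scalerBl scalerA.
by rewrite -scaler_suml /lam rmorph_sum; congr (_ *: _); apply: eq_bigr => j _;
  rewrite rmorphM rmorphB rmorph1.
Qed.

Lemma sum_chi S : \sum_T chi T S = if S == [ffun=> false] then 2 ^+ m else 0.
Proof.
rewrite /chi.
have -> : \sum_(T : Sub) \prod_j (if S j && T j then -1 else 1 : R) =
          \prod_j \sum_(b : bool) (if S j && b then -1 else 1 : R).
  by rewrite bigA_distr_bigA.
under eq_bigr do rewrite big_bool /=.
case: eqP => [->|hS].
  by under eq_bigr do rewrite ffunE /=; rewrite prodr_const card_ord.
have [j hj] : exists j, S j.
  apply/existsP; apply: contraNT (introN eqP hS); rewrite negb_exists => /forallP H.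
  apply/eqP/ffunP => j; rewrite ffunE; exact/negbTE/H.
by rewrite (bigD1 j) //= hj /= addNr mul0r.
Qed.

Lemma chiC T S : chi T S = chi S T.
Proof. by apply: eq_bigr => j _; rewrite andbC. Qed.

Lemma sum_RT X : \sum_T RT T X = X.
Proof.
rewrite /RT -scaler_sumr exchange_big /=.
under eq_bigr do rewrite -scaler_suml -rmorph_sum sum_chi.
rewrite (bigD1 [ffun=> false]) //= eqxx big1 ?addr0; last first.
  by move=> S /negbTE ->; rewrite rmorph0 scale0r.
rewrite U0 Ad1 scalerA -rmorphM mulVf ?rmorph1 ?scale1r //.
Qed.

Lemma iter_L k X : iter k Lsimp X = \sum_T (((lam T) ^+ k)%:C)%C *: RT T X.
Proof.
elim: k => [|k IH].
  by rewrite /= -[LHS]sum_RT; apply: eq_bigr => T _; rewrite expr0 rmorph1 scale1r.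
rewrite iterS IH Lsimp_sum; apply: eq_bigr => T _.
by rewrite LsimpZ L_RT scalerA -rmorphM exprS mulrC.
Qed.

End Fourier.

Import numFieldNormedType.Exports.
Local Open Scope classical_set_scope.
Section Conv.
Variable R : realType.
Local Notation C := (R[i]).

Lemma cvg_sumR (I : Type) (r : seq I) (f : I -> nat -> R) (l : I -> R) :
  (forall i, f i n @[n --> \oo] --> l i) ->
  (\sum_(i <- r) f i n) @[n --> \oo] --> \sum_(i <- r) l i.
Proof.
move=> H; elim: r => [|x r IH].
  rewrite big_nil; under eq_fun do rewrite big_nil; exact: cvg_cst.
rewrite big_cons; under eq_fun do rewrite big_cons; exact: cvgD.
Qed.

Lemma Re_rC (a : R) (z : C) : complex.Re ((a%:C)%C * z) = a * complex.Re z.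
Proof. by case: z => x y /=; rewrite mul0r subr0. Qed.
Lemma Im_rC (a : R) (z : C) : complex.Im ((a%:C)%C * z) = a * complex.Im z.
Proof. by case: z => x y /=; rewrite mul0r addr0. Qed.

Lemma Re_sum (I : Type) (r : seq I) (F : I -> C) :
  complex.Re (\sum_(i <- r) F i) = \sum_(i <- r) complex.Re (F i).
Proof. by rewrite raddf_sum. Qed.
Lemma Im_sum (I : Type) (r : seq I) (F : I -> C) :
  complex.Im (\sum_(i <- r) F i) = \sum_(i <- r) complex.Im (F i).
Proof. by rewrite raddf_sum. Qed.

Lemma cvgC_sum (I : finType) (a : I -> nat -> R) (la : I -> R) (z : I -> C) :
  (forall i, a i n @[n --> \oo] --> la i) ->
  cvgC (fun N => \sum_i ((a i N)%:C)%C * z i) (\sum_i ((la i)%:C)%C * z i).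
Proof.
move=> H; split.
  have -> : (fun N => complex.Re (\sum_i ((a i N)%:C)%C * z i)) =
            (fun N => \sum_i a i N * complex.Re (z i)).
    by apply: funext => N; rewrite Re_sum; apply: eq_bigr => i _; rewrite Re_rC.
  rewrite Re_sum; under eq_bigr do rewrite Re_rC.
  apply: cvg_sumR => i; apply: cvgMl; exact: H.
have -> : (fun N => complex.Im (\sum_i ((a i N)%:C)%C * z i)) =
          (fun N => \sum_i a i N * complex.Im (z i)).
  by apply: funext => N; rewrite Im_sum; apply: eq_bigr => i _; rewrite Im_rC.
rewrite Im_sum; under eq_bigr do rewrite Im_rC.
apply: cvg_sumR => i; apply: cvgMl; exact: H.
Qed.

Lemma exp_cvg (x : R) : series (exp_coeff x) n @[n --> \oo] --> expR x.
Proof. exact: is_cvg_series_exp_coeff. Qed.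

End Conv.

Section Expo.
Variables (R : realType) (n m : nat) (s : 'I_m -> 'I_n -> 'I_4) (gamma : 'I_m -> R).
Local Notation C := (R[i]).
Local Notation d := (2 ^ n)%N.
Local Notation P j := (pauli R (s j)).
Local Notation Sub := {ffun 'I_m -> bool}.
Local Notation U := (@U R n m s).
Local Notation Lsimp := (@Lsimp R n m s gamma).
Local Notation lam := (@lam R m gamma).
Local Notation RT := (@RT R n m s).
Local Notation chi := (@chi R m).

Definition q (S : Sub) (t : R) : R :=
  (2 ^+ m)^-1 * \sum_(T : Sub) chi T S * expR (t * lam T).
Definition sigma (t : R) (rho : 'M[C]_d) :=
  \sum_(S : Sub) ((q S t)%:C)%C *: Ad (U S) rho.

Lemma sigma_RT t rho :
  \sum_(T : Sub) ((expR (t * lam T))%:C)%C *: RT T rho = sigma t rho.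
Proof.
rewrite /sigma /RT.
under eq_bigr do rewrite scalerA scaler_sumr.
rewrite exchange_big /=; apply: eq_bigr => S _.
rewrite /q mulr_sumr rmorph_sum scaler_suml; apply: eq_bigr => T _.
by rewrite scalerA !rmorphM; congr (_ *: _); ring.
Qed.

Lemma expL_sigma t rho :
  is_expL (lindbladian gamma (fun j => P j)) t rho (sigma t rho).
Proof.
move=> i j; rewrite -sigma_RT.
have E k : iter k (lindbladian gamma (fun j => P j)) rho = iter k Lsimp rho.
  by apply: eq_iter => X; exact: L_eq.
have -> : (fun N => \sum_(k < N) ((t ^+ k / (k`!)%:R)%:C)%C *
              iter k (lindbladian gamma (fun j => P j)) rho i j) =
          (fun N => \sum_(T : Sub) ((series (exp_coeff (t * lam T)) N)%:C)%C * RT T rho i j).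
  apply: funext => N; under eq_bigr do rewrite E iter_L summxE mulr_sumr.
  rewrite exchange_big /=; apply: eq_bigr => T _.
  rewrite /series /= big_mkord rmorph_sum mulr_suml; apply: eq_bigr => k _.
  rewrite mxE /exp_coeff /= !rmorphM exprMn; ring.
rewrite summxE.
under [X in cvgC _ X]eq_bigr do rewrite mxE.
apply: cvgC_sum => T; exact: exp_cvg.
Qed.

End Expo.

Import numFieldNormedType.Exports.
Local Open Scope classical_set_scope.
Section Prog.
Variables (R : realType) (n m : nat) (s : 'I_m -> 'I_n -> 'I_4) (gamma : 'I_m -> R).
Hypothesis hgamma : forall j, 0 <= gamma j.
Local Notation C := (R[i]).
Local Notation d := (2 ^ n)%N.
Local Notation Sub := {ffun 'I_m -> bool}.
Local Notation lam := (@lam R m gamma).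
Local Notation chi := (@chi R m).
Local Notation q := (@q R m gamma).

Lemma lam0 : lam [ffun=> false] = 0.
Proof. by rewrite /lam big1 // => j _; rewrite /cj ffunE subrr mulr0. Qed.

Lemma sum_q t : \sum_(S : Sub) q S t = 1.
Proof.
rewrite /q -mulr_sumr exchange_big /=.
under eq_bigr do rewrite -mulr_suml.
under eq_bigr do under eq_bigr do rewrite chiC.
under eq_bigr do rewrite sum_chi.
rewrite (bigD1 [ffun=> false]) //= eqxx big1 ?addr0; last first.
  by move=> T /negbTE ->; rewrite mul0r.
by rewrite lam0 mulr0 expR0 mulr1 mulVf // expf_neq0 // pnatr_eq0.
Qed.

Lemma q_ge0 S t : 0 <= t -> 0 <= q S t.
Proof.
move=> ht; rewrite /q; apply: mulr_ge0; first by rewrite invr_ge0 exprn_ge0.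
pose F (j : 'I_m) (b : bool) : R :=
  (if S j && b then -1 else 1) * expR (t * (gamma j * ((if b then -1 else 1) - 1))).
have -> : \sum_(T : Sub) chi T S * expR (t * lam T) = \prod_j \sum_(b : bool) F j b.
  rewrite bigA_distr_bigA /=; apply: eq_bigr => T _.
  rewrite /chi /lam mulr_sumr expR_sum -big_split /=.
  by apply: eq_bigr => j _; rewrite /F /cj.
apply: prodr_ge0 => j _; rewrite big_bool /F /= !andbT andbF mul1r.
rewrite subrr mulr0 mulr0 expR0.
case: (S j); last by rewrite mul1r addr_ge0 // expR_ge0.
rewrite mulN1r addrC subr_ge0 expR_le1.
by rewrite mulr_ge0_le0 // mulr_ge0_le0 // subr_le0 lerN10.
Qed.

End Prog.
Section Cont.
Variables (R : realType) (m : nat) (gamma : 'I_m -> R).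
Local Notation lam := (@lam R m gamma).
Local Notation q := (@q R m gamma).

Lemma cvg_sumF (I T : Type) (F : set_system T) (FF : Filter F) (r : seq I)
  (f : I -> T -> R) (l : I -> R) :
  (forall i, f i x @[x --> F] --> l i) ->
  (\sum_(i <- r) f i x) @[x --> F] --> \sum_(i <- r) l i.
Proof.
move=> H; elim: r => [|x r IH].
  rewrite big_nil; under eq_fun do rewrite big_nil; exact: cvg_cst.
rewrite big_cons; under eq_fun do rewrite big_cons; exact: cvgD.
Qed.

Lemma q_cont S : continuous (q S).
Proof.
move=> x; rewrite /q; apply: cvgMr.
apply: cvg_sumF => T; apply: cvgMr.
apply: continuous_comp; last exact: continuous_expR.
by apply: cvgMl; exact: cvg_id.
Qed.
End Cont.

Section CP.
Variable R : realType.
Local Notation C := (R[i]).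

Lemma psd_conj a b (M : 'M[C]_(b, a)) (X : 'M[C]_a) :
  psd X -> psd (M *m X *m adjmx M).
Proof.
move=> H v; have := H (adjmx M *m v).
by rewrite adjmx_mul adjmxK !mulmxA.
Qed.

Lemma psd_sum a I (r : seq I) (F : I -> 'M[C]_a) :
  (forall i, psd (F i)) -> psd (\sum_(i <- r) F i).
Proof.
move=> H v; rewrite mulmx_sumr mulmx_suml summxE; apply: sumr_ge0 => i _.
exact: H.
Qed.

Lemma block_decomp k a (X : 'M[C]_(k * a)) :
  X = \sum_(p < k) \sum_(q < k) (delta_mx p q *t blockmx p q X).
Proof.
apply/matrixP => i j; case: (mxtens_indexP i) => p0 r; case: (mxtens_indexP j) => q0 s'.
rewrite summxE; under eq_bigr do rewrite summxE.
under eq_bigr do under eq_bigr do rewrite tensmxE mxE.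
rewrite (bigD1 p0) //= [X in _ = _ + X]big1 ?addr0; last first.
  by move=> p hp; apply: big1 => q _; rewrite eq_sym (negbTE hp) mul0r.
rewrite (bigD1 q0) //= [X in _ = _ + X]big1 ?addr0; last first.
  by move=> q hq; rewrite [q0 == q]eq_sym (negbTE hq) andbF mul0r.
by rewrite !eqxx mul1r mxE.
Qed.

Lemma adjmx_tens k b a (K : 'M[C]_(b, a)) :
  adjmx (1%:M *t K : 'M[C]_(k * b, k * a)) = 1%:M *t adjmx K.
Proof.
apply/matrixP => i j; case: (mxtens_indexP i) => p0 r; case: (mxtens_indexP j) => q0 s'.
by rewrite mxE !tensmxE !mxE rmorphM rmorph_nat eq_sym.
Qed.

Lemma ampl_Kr k a b (K : 'M[C]_(b, a)) (X : 'M[C]_(k * a)) :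
  ampl (fun Y => K *m Y *m adjmx K) X =
  (1%:M *t K : 'M[C]_(k * b, k * a)) *m X *m adjmx (1%:M *t K : 'M[C]_(k * b, k * a)).
Proof.
rewrite [in RHS](block_decomp X) adjmx_tens mulmx_sumr mulmx_suml /ampl.
apply: eq_bigr => p _; rewrite mulmx_sumr mulmx_suml; apply: eq_bigr => q _.
by rewrite !tensmx_mul mul1mx mulmx1.
Qed.

Lemma tensmx_sumr k l b c (A : 'M[C]_(k, l)) I (r : seq I) (F : I -> 'M[C]_(b, c)) :
  A *t (\sum_(i <- r) F i) = \sum_(i <- r) (A *t F i).
Proof.
apply/matrixP => i j; rewrite !mxE summxE summxE mulr_sumr.
by apply: eq_bigr => x _; rewrite mxE.
Qed.

Lemma ampl_sum k a b I (r : seq I) (F : I -> 'M[C]_a -> 'M[C]_b) (X : 'M[C]_(k * a)) :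
  ampl (fun Y => \sum_(i <- r) F i Y) X = \sum_(i <- r) ampl (F i) X.
Proof.
rewrite /ampl; under eq_bigr do under eq_bigr do rewrite tensmx_sumr.
under eq_bigr do rewrite exchange_big.
by rewrite exchange_big.
Qed.

Definition kraus a b I (r : seq I) (K : I -> 'M[C]_(b, a)) (X : 'M[C]_a) : 'M[C]_b :=
  \sum_(i <- r) K i *m X *m adjmx (K i).

Lemma kraus_CPTP a b I (r : seq I) (K : I -> 'M[C]_(b, a)) :
  \sum_(i <- r) adjmx (K i) *m K i = 1%:M -> CPTP (kraus r K).
Proof.
move=> H; split; [|split].
- move=> c X Y; rewrite /kraus scaler_sumr -big_split /=; apply: eq_bigr => i _.
  by rewrite mulmxDr mulmxDl -scalemxAr -scalemxAl.
- move=> k X hX; rewrite /kraus ampl_sum; apply: psd_sum => i.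
  rewrite ampl_Kr; exact: psd_conj.
- move=> X; rewrite /kraus raddf_sum /=.
  under eq_bigr do rewrite mxtrace_mulC mulmxA.
  by rewrite -raddf_sum /= -mulmx_suml H mul1mx.
Qed.

End CP.

Import numFieldNormedType.Exports.
Local Open Scope classical_set_scope.
Section Final.
Variables (R : realType) (n m : nat) (s : 'I_m -> 'I_n -> 'I_4).
Local Notation C := (R[i]).
Local Notation d := (2 ^ n)%N.
Local Notation Sub := {ffun 'I_m -> bool}.
Local Notation dP := #|{ffun 'I_m -> bool}|.
Local Notation U := (@U R n m s).

Definition Eop (p : 'I_dP) : 'M[C]_(d, d * dP) :=
  \matrix_(x, c) ((mxtens_index (x, p) == c)%:R).

Lemma E_mul l p (M : 'M[C]_(d * dP, l)) x c :
  (Eop p *m M) x c = M (mxtens_index (x, p)) c.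
Proof.
rewrite mxE (bigD1 (mxtens_index (x, p))) //= big1 ?addr0.
  by rewrite mxE eqxx mul1r.
by move=> c' hc; rewrite mxE eq_sym (negbTE hc) mul0r.
Qed.

Lemma mul_Eadj l p (M : 'M[C]_(l, d * dP)) c y :
  (M *m adjmx (Eop p)) c y = M c (mxtens_index (y, p)).
Proof.
rewrite mxE (bigD1 (mxtens_index (y, p))) //= big1 ?addr0.
  by rewrite !mxE eqxx rmorph1 mulr1.
by move=> c' hc; rewrite !mxE eq_sym (negbTE hc) rmorph0 mulr0.
Qed.

Lemma sum_EE : \sum_p adjmx (Eop p) *m Eop p = 1%:M.
Proof.
apply/matrixP => c c'; case: (mxtens_indexP c) => x0 p0.
rewrite summxE (bigD1 p0) //= big1 ?addr0; last first.
  move=> p hp; rewrite mxE big1 // => x _; rewrite !mxE.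
  rewrite (inj_eq (can_inj (@mxtens_indexK _ _))) xpair_eqE [p == p0](negbTE hp) andbF.
  by rewrite rmorph0 mul0r.
rewrite mxE (bigD1 x0) //= big1 ?addr0; last first.
  move=> x hx; rewrite !mxE.
  rewrite (inj_eq (can_inj (@mxtens_indexK _ _))) xpair_eqE (negbTE hx) /=.
  by rewrite rmorph0 mul0r.
by rewrite !mxE eqxx rmorph1 mul1r.
Qed.

Definition Kop (p : 'I_dP) : 'M[C]_(d, d * dP) := U (enum_val p) *m Eop p.

Lemma sum_KK : \sum_(p <- index_enum 'I_dP) adjmx (Kop p) *m Kop p = 1%:M.
Proof.
rewrite -[RHS]sum_EE; apply: eq_bigr => p _.
by rewrite /Kop adjmx_mul mulmxA -(mulmxA (adjmx (Eop p))) U_unitary mulmx1.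
Qed.

Definition Phi := kraus (index_enum 'I_dP) Kop.

Lemma Phi_tens rho (pi : 'M[C]_dP) :
  Phi (rho *t pi) = \sum_p pi p p *: Ad (U (enum_val p)) rho.
Proof.
apply: eq_bigr => p _; rewrite /Kop adjmx_mul !mulmxA.
have -> : U (enum_val p) *m Eop p *m (rho *t pi) *m adjmx (Eop p) =
          U (enum_val p) *m (pi p p *: rho).
  rewrite -!mulmxA; congr (_ *m _); apply/matrixP => x y.
  by rewrite mulmxA mul_Eadj E_mul tensmxE mxE mulrC.
by rewrite /Ad -scalemxAr -scalemxAl.
Qed.

End Final.

Section Final2.
Variables (R : realType) (n m : nat) (s : 'I_m -> 'I_n -> 'I_4) (gamma : 'I_m -> R).
Local Notation C := (R[i]).
Local Notation Sub := {ffun 'I_m -> bool}.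
Local Notation dP := #|{ffun 'I_m -> bool}|.

Lemma sum_enum (V : zmodType) (F : Sub -> V) :
  \sum_(p < dP) F (enum_val p) = \sum_(S : Sub) F S.
Proof. by rewrite -big_enum_val. Qed.

Definition piP (t : R) : 'M[C]_dP :=
  \matrix_(a, b) if a == b then ((@q R m gamma (enum_val a) t)%:C)%C else 0.

End Final2.

Theorem theorem1 (R : realType) (n : nat) (hn : (1 <= n)%N) (m : nat)
  (gamma : 'I_m -> R) (s : 'I_m -> 'I_n -> 'I_4)
  (hgamma : forall j, 0 <= gamma j) :
  quantum_programmable (lindbladian gamma (fun j => @pauli R n (s j))).
Proof.
exists #|{ffun 'I_m -> bool}|, (@Phi R n m s), (piP gamma).
split; first exact: (kraus_CPTP (@sum_KK R n m s)).
split.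
  move=> t ht; split.
    move=> v; rewrite mxE; apply: sumr_ge0 => b _.
    rewrite mxE (bigD1 b) //= big1 ?addr0; last first.
      by move=> a hab; rewrite [piP _ _ a b]mxE (negbTE hab) mulr0.
    rewrite !mxE eqxx mulrAC mulrC; apply: mulr_ge0.
      by rewrite lecR; exact: q_ge0.
    by rewrite mulrC; exact: mul_conjC_ge0.
  rewrite /mxtrace; under eq_bigr do rewrite mxE eqxx.
  by rewrite (sum_enum (fun S => ((@q R m gamma S t)%:C)%C)) -rmorph_sum sum_q.
split.
  move=> a b; rewrite /continuousC_on.
  have -> : (fun t => complex.Re (piP gamma t a b)) =
            (fun t => if a == b then @q R m gamma (enum_val a) t else 0).
    by apply: funext => t; rewrite mxE; case: eqP.
  have -> : (fun t => complex.Im (piP gamma t a b)) = (fun t => 0).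
    by apply: funext => t; rewrite mxE; case: eqP.
  split; apply: continuous_subspaceT; last exact: cst_continuous.
  case: eqP => _; [exact: q_cont | exact: cst_continuous].
move=> t ht rho; rewrite Phi_tens.
have -> : \sum_p piP gamma t p p *: Ad (@U R n m s (enum_val p)) rho = @sigma R n m s gamma t rho.
  under eq_bigr do rewrite mxE eqxx.
  exact: (sum_enum (fun S => ((@q R m gamma S t)%:C)%C *: Ad (@U R n m s S) rho)).
exact: expL_sigma.
Qed.
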